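(* Let $N$ be a surface in a three-dimensional contact manifold with subriemannian structure, let $(v_1,v_2)$ be an adapted frame near a regular point of $N$, let $v_0$ be the Reeb field, and define functions $a_{ij}^k$ by $[v_i,v_j]=\sum_{k=0}^2a_{ij}^kv_k$ for $i,j\in\{0,1,2\}$. Then on the regular points of $N$ where the frame is defined, the curvature of transversality satisfies \[ \mathfrak r=-a_{01}^2-\mathfrak a\,a_{12}^2 . \]
   Context: A three-dimensional contact manifold $M$ carries a rank-2 distribution $\Delta$ (kernel of a contact form) with an inner product on $\Delta$. Fix the contact form $\alpha_0$ with $\ker\alpha_0=\Delta$ normalized so that $d\alpha_0(w_1,w_2)=\pm1$ for orthonormal $w_1,w_2\in\Delta_x$, with convention $d\alpha(X,Y)=X\alpha(Y)-Y\alpha(X)-\alpha([X,Y])$; the Reeb field $v_0$ satisfies $\alpha_0(v_0)=1$, $d\alpha_0(v_0,\cdot)=0$. For a surface $N\subset M$, $x\in N$ is regular if $T_xN\neq\Delta_x$. An adapted frame near a regular point is a pair of local orthonormal sections $v_1,v_2$ of $\Delta$ with $v_1$ tangent to $N$ along $N$ and $d\alpha_0(v_1,v_2)=1$. The degree of transversality (DOT) $\mathfrak a$ is the function on regular points with $v_0-\mathfrak a v_2\in TN$. The curvature of transversality (COT) is $\mathfrak r=v_1\mathfrak a-\mathfrak a^2$. *)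

(* Defs.v *)
From Stdlib Require Import Reals Lra ClassicalEpsilon.
Open Scope R_scope.

(** Points / tangent vectors of R^3 (a chart of the 3-manifold M). *)
Record V3 := mkV3 { c0 : R; c1 : R; c2 : R }.

Definition coord (v : V3) (i : nat) : R :=
  match i with 0%nat => c0 v | 1%nat => c1 v | _ => c2 v end.

Definition sum3 (f : nat -> R) : R := f 0%nat + f 1%nat + f 2%nat.

Definition vadd (u w : V3) : V3 := mkV3 (c0 u + c0 w) (c1 u + c1 w) (c2 u + c2 w).
Definition vscale (t : R) (u : V3) : V3 := mkV3 (t * c0 u) (t * c1 u) (t * c2 u).
Definition vsub (u w : V3) : V3 := vadd u (vscale (-1) w).
Definition vzero : V3 := mkV3 0 0 0.
Definition ebasis (i : nat) : V3 :=
  match i with 0%nat => mkV3 1 0 0 | 1%nat => mkV3 0 1 0 | _ => mkV3 0 0 1 end.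
Definition vnorm (u : V3) : R := Rabs (c0 u) + Rabs (c1 u) + Rabs (c2 u).

Definition is_open (U : V3 -> Prop) : Prop :=
  forall x, U x -> exists d, 0 < d /\ forall y, vnorm (vsub y x) < d -> U y.
Definition cont_at (f : V3 -> R) (x : V3) : Prop :=
  forall eps, 0 < eps -> exists d, 0 < d /\
    forall y, vnorm (vsub y x) < d -> Rabs (f y - f x) < eps.

Definition dir_deriv_at (f : V3 -> R) (x v : V3) (l : R) : Prop :=
  derivable_pt_lim (fun t => f (vadd x (vscale t v))) 0 l.
Definition dd (f : V3 -> R) (x v : V3) : R :=
  epsilon (inhabits 0) (fun l => dir_deriv_at f x v l).
Definition partial (i : nat) (f : V3 -> R) (x : V3) : R := dd f x (ebasis i).

Fixpoint Ck (k : nat) (U : V3 -> Prop) (f : V3 -> R) : Prop :=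
  match k with
  | O => forall x, U x -> cont_at f x
  | S k' => (forall x, U x -> cont_at f x)
         /\ (forall x, U x -> forall i, (i < 3)%nat -> exists l, dir_deriv_at f x (ebasis i) l)
         /\ (forall i, (i < 3)%nat -> Ck k' U (partial i f))
  end.
Definition smooth (U : V3 -> Prop) (f : V3 -> R) : Prop := forall k, Ck k U f.

Definition VF := V3 -> V3.
Definition smoothVF (U : V3 -> Prop) (X : VF) : Prop :=
  forall i, (i < 3)%nat -> smooth U (fun y => coord (X y) i).
Definition vf_apply (X : VF) (f : V3 -> R) (y : V3) : R :=
  sum3 (fun i => coord (X y) i * partial i f y).
Definition bracket_comp (X Y : VF) (j : nat) (y : V3) : R :=
  vf_apply X (fun z => coord (Y z) j) y - vf_apply Y (fun z => coord (X z) j) y.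
Definition bracket (X Y : VF) : VF := fun y =>
  mkV3 (bracket_comp X Y 0 y) (bracket_comp X Y 1 y) (bracket_comp X Y 2 y).

(** 1-forms (given by components) and their exterior derivative.
    dA al y u w = sum_{i,j} (d_i al_j - d_j al_i)(y) u_i w_j, which is the
    pointwise form of the convention dα(X,Y) = Xα(Y) - Yα(X) - α([X,Y]). *)
Definition Form := V3 -> V3.
Definition form_eval (al : Form) (y w : V3) : R := sum3 (fun i => coord (al y) i * coord w i).
Definition dA (al : Form) (y u w : V3) : R :=
  sum3 (fun i => sum3 (fun j =>
    (partial i (fun z => coord (al z) j) y - partial j (fun z => coord (al z) i) y)
    * coord u i * coord w j)).
(** (α ∧ dα)(e0,e1,e2) *)
Definition contact_vol (al : Form) (y : V3) : R :=
  coord (al y) 0 * dA al y (ebasis 1) (ebasis 2)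
  + coord (al y) 1 * dA al y (ebasis 2) (ebasis 0)
  + coord (al y) 2 * dA al y (ebasis 0) (ebasis 1).

Definition in_Delta (al : Form) (y w : V3) : Prop := form_eval al y w = 0.

Definition ip (g : V3 -> nat -> nat -> R) (y u w : V3) : R :=
  sum3 (fun i => sum3 (fun j => g y i j * coord u i * coord w j)).

Definition sR_contact (U : V3 -> Prop) (al0 : Form) (g : V3 -> nat -> nat -> R)
    (v0 : VF) : Prop :=
  is_open U
  /\ (forall i, (i < 3)%nat -> smooth U (fun y => coord (al0 y) i))
  /\ (forall y, U y -> contact_vol al0 y <> 0)
  /\ (forall i j, (i < 3)%nat -> (j < 3)%nat -> smooth U (fun y => g y i j))
  /\ (forall y i j, U y -> g y i j = g y j i)
  /\ (forall y w, U y -> in_Delta al0 y w -> w <> vzero -> 0 < ip g y w w)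
  /\ (forall y w1 w2, U y -> in_Delta al0 y w1 -> in_Delta al0 y w2 ->
        ip g y w1 w1 = 1 -> ip g y w2 w2 = 1 -> ip g y w1 w2 = 0 ->
        dA al0 y w1 w2 = 1 \/ dA al0 y w1 w2 = -1)
  /\ smoothVF U v0
  /\ (forall y, U y -> form_eval al0 y (v0 y) = 1 /\ forall w, dA al0 y (v0 y) w = 0).

Definition is_surface (N : V3 -> Prop) : Prop :=
  forall p, N p -> exists (O : V3 -> Prop) (F : V3 -> R),
    is_open O /\ O p /\ smooth O F
    /\ (forall y, O y -> exists i, (i < 3)%nat /\ partial i F y <> 0)
    /\ (forall y, O y -> (N y <-> F y = 0)).

Definition has_velocity (gam : R -> V3) (w : V3) : Prop :=
  forall i, (i < 3)%nat -> derivable_pt_lim (fun t => coord (gam t) i) 0 (coord w i).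
Definition curve_in (N : V3 -> Prop) (gam : R -> V3) (x : V3) : Prop :=
  (forall t, N (gam t)) /\ gam 0 = x.
Definition tangent (N : V3 -> Prop) (x w : V3) : Prop :=
  exists gam, curve_in N gam x /\ has_velocity gam w.

Definition regular (N : V3 -> Prop) (al0 : Form) (x : V3) : Prop :=
  ~ (forall w, tangent N x w <-> in_Delta al0 x w).

Definition derivN (N : V3 -> Prop) (f : V3 -> R) (x w : V3) (l : R) : Prop :=
  forall gam, curve_in N gam x -> has_velocity gam w ->
    derivable_pt_lim (fun t => f (gam t)) 0 l.

Definition adapted_frame (W : V3 -> Prop) (N : V3 -> Prop) (al0 : Form)
    (g : V3 -> nat -> nat -> R) (v1 v2 : VF) : Prop :=
  is_open W /\ smoothVF W v1 /\ smoothVF W v2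
  /\ (forall y, W y ->
        in_Delta al0 y (v1 y) /\ in_Delta al0 y (v2 y)
        /\ ip g y (v1 y) (v1 y) = 1 /\ ip g y (v2 y) (v2 y) = 1
        /\ ip g y (v1 y) (v2 y) = 0
        /\ dA al0 y (v1 y) (v2 y) = 1)
  /\ (forall y, W y -> N y -> tangent N y (v1 y)).

Definition is_DOT (W : V3 -> Prop) (N : V3 -> Prop) (al0 : Form) (v0 v2 : VF)
    (a : V3 -> R) : Prop :=
  forall y, W y -> N y -> regular N al0 y ->
    tangent N y (vsub (v0 y) (vscale (a y) (v2 y))).

Definition frame3 (v0 v1 v2 : VF) (k : nat) : VF :=
  match k with 0%nat => v0 | 1%nat => v1 | _ => v2 end.

Definition structure_functions (W : V3 -> Prop) (v0 v1 v2 : VF)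
    (A : nat -> nat -> nat -> V3 -> R) : Prop :=
  forall i j, (i < 3)%nat -> (j < 3)%nat -> forall y, W y ->
    forall m, (m < 3)%nat ->
      coord (bracket (frame3 v0 v1 v2 i) (frame3 v0 v1 v2 j) y) m
      = sum3 (fun k => A i j k y * coord (frame3 v0 v1 v2 k y) m).

(* Main.v *)
Require Import Defs.
From Stdlib Require Import Reals.
From Stdlib Require Import Lra Lia FunctionalExtensionality ClassicalEpsilon.
From Coquelicot Require Coquelicot.
Open Scope R_scope.
Notation c1 := Defs.c1.


Lemma vadd_scale0 y v : vadd y (vscale 0 v) = y.
Proof. destruct y, v; unfold vadd, vscale; simpl; f_equal; ring. Qed.

Lemma vshift y s h v : vadd (vadd y (vscale s v)) (vscale h v) = vadd y (vscale (s+h) v).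
Proof. destruct y, v; unfold vadd, vscale; simpl; f_equal; ring. Qed.

Lemma dpl_shift0 (G : R -> R) s l :
  derivable_pt_lim (fun t => G (s + t)) 0 l <-> derivable_pt_lim G s l.
Proof.
  unfold derivable_pt_lim; split; intros H e He; destruct (H e He) as [d Hd];
  exists d; intros h Hh Hhd; specialize (Hd h Hh Hhd);
  rewrite ?Rplus_0_l, ?Rplus_0_r in *; exact Hd.
Qed.

Lemma dd_shift f y s v l :
  dir_deriv_at f (vadd y (vscale s v)) v l <->
  derivable_pt_lim (fun t => f (vadd y (vscale t v))) s l.
Proof.
  unfold dir_deriv_at.
  replace (fun t => f (vadd (vadd y (vscale s v)) (vscale t v)))
    with (fun t => (fun u => f (vadd y (vscale u v))) (s + t)).
  - exact (dpl_shift0 (fun u => f (vadd y (vscale u v))) s l).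
  - apply functional_extensionality; intro t; now rewrite vshift.
Qed.

Lemma dd_at f y v l :
  dir_deriv_at f y v l <-> derivable_pt_lim (fun t => f (vadd y (vscale t v))) 0 l.
Proof. unfold dir_deriv_at; tauto. Qed.

Lemma dpl_ext_loc (f g : R -> R) x l d : 0 < d ->
  (forall t, Rabs (t - x) < d -> f t = g t) ->
  derivable_pt_lim f x l -> derivable_pt_lim g x l.
Proof.
  intros Hd Heq H e He. destruct (H e He) as [d1 Hd1].
  assert (Hm : 0 < Rmin d d1) by (apply Rmin_pos; [lra | apply cond_pos]).
  exists (mkposreal _ Hm). intros h Hh Hhd; simpl in Hhd.
  rewrite <- (Heq (x+h)), <- (Heq x).
  - apply Hd1; auto. apply Rlt_le_trans with (1 := Hhd); apply Rmin_r.
  - replace (x - x) with 0 by ring; rewrite Rabs_R0; lra.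
  - replace (x + h - x) with h by ring.
    apply Rlt_le_trans with (1 := Hhd); apply Rmin_l.
Qed.

Lemma dd_spec f y v : (exists l, dir_deriv_at f y v l) -> dir_deriv_at f y v (dd f y v).
Proof. intro H; unfold dd. apply epsilon_spec. exact H. Qed.

Lemma dd_eq f y v l : dir_deriv_at f y v l -> dd f y v = l.
Proof.
  intro H. assert (H2 := dd_spec f y v (ex_intro _ l H)).
  exact (uniqueness_limite _ _ _ _ H2 H).
Qed.

Lemma partial_eq i f y l : dir_deriv_at f y (ebasis i) l -> partial i f y = l.
Proof. apply dd_eq. Qed.

Lemma mvt_gen (G G' : R -> R) (b : R) :
  (forall c, Rabs c <= Rabs b -> derivable_pt_lim G c (G' c)) ->
  exists c, Rabs c <= Rabs b /\ G b - G 0 = G' c * b.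
Proof.
  intro H. destruct (Rtotal_order b 0) as [Hb|[Hb|Hb]].
  - destruct (MVT_cor2 G G' b 0 Hb) as [c [Hc1 Hc2]].
    + intros c Hc; apply H. rewrite (Rabs_left b Hb).
      unfold Rabs; destruct (Rcase_abs c); lra.
    + exists c; split. rewrite (Rabs_left b Hb). unfold Rabs; destruct (Rcase_abs c); lra.
      lra.
  - subst. exists 0. split. lra. ring.
  - destruct (MVT_cor2 G G' 0 b Hb) as [c [Hc1 Hc2]].
    + intros c Hc; apply H. rewrite (Rabs_right b) by lra.
      unfold Rabs; destruct (Rcase_abs c); lra.
    + exists c; split. rewrite (Rabs_right b) by lra. unfold Rabs; destruct (Rcase_abs c); lra.
      lra.
Qed.


Definition mk (p : V3) u0 u1 u2 := mkV3 (c0 p + u0) (c1 p + u1) (c2 p + u2).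

Lemma mk_vnorm p u0 u1 u2 : vnorm (vsub (mk p u0 u1 u2) p) = Rabs u0 + Rabs u1 + Rabs u2.
Proof.
  unfold vnorm, vsub, vadd, vscale, mk; simpl.
  replace (c0 p + u0 + -1 * c0 p) with u0 by ring.
  replace (c1 p + u1 + -1 * c1 p) with u1 by ring.
  replace (c2 p + u2 + -1 * c2 p) with u2 by ring. reflexivity.
Qed.

Lemma mk_e0 p u1 u2 c : vadd (mk p 0 u1 u2) (vscale c (ebasis 0)) = mk p c u1 u2.
Proof. unfold mk, vadd, vscale; simpl; f_equal; ring. Qed.
Lemma mk_e1 p u2 c : vadd (mk p 0 0 u2) (vscale c (ebasis 1)) = mk p 0 c u2.
Proof. unfold mk, vadd, vscale; simpl; f_equal; ring. Qed.
Lemma mk_e2 p c : vadd (mk p 0 0 0) (vscale c (ebasis 2)) = mk p 0 0 c.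
Proof. unfold mk, vadd, vscale; simpl; f_equal; ring. Qed.
Lemma mk_q p q : q = mk p (c0 q - c0 p) (c1 q - c1 p) (c2 q - c2 p).
Proof. destruct q; unfold mk; simpl; f_equal; ring. Qed.
Lemma mk_p p : p = mk p 0 0 0.
Proof. destruct p; unfold mk; simpl; f_equal; ring. Qed.

Lemma seg_step (O : V3 -> Prop) f D y i s :
  (forall z, O z -> dir_deriv_at f z (ebasis i) (D i z)) ->
  (forall c, Rabs c <= Rabs s -> O (vadd y (vscale c (ebasis i)))) ->
  exists c, Rabs c <= Rabs s /\
    f (vadd y (vscale s (ebasis i))) - f y = D i (vadd y (vscale c (ebasis i))) * s.
Proof.
  intros HD HO.
  destruct (mvt_gen (fun t => f (vadd y (vscale t (ebasis i))))
              (fun c => D i (vadd y (vscale c (ebasis i)))) s) as [c [Hc Heq]].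
  - intros c Hc. apply dd_shift. apply HD. apply HO. exact Hc.
  - exists c; split; auto. rewrite vadd_scale0 in Heq. exact Heq.
Qed.

Lemma cur_cont gam w i : has_velocity gam w -> (i < 3)%nat ->
  forall e, 0 < e -> exists d, 0 < d /\ forall h, h <> 0 -> Rabs h < d ->
   Rabs ((coord (gam h) i - coord (gam 0) i)/h - coord w i) < e.
Proof.
  intros Hv Hi e He. destruct (Hv i Hi e He) as [d Hd].
  exists d; split. apply cond_pos. intros h Hh Hhd. specialize (Hd h Hh Hhd).
  rewrite Rplus_0_l in Hd. exact Hd.
Qed.

Lemma bound_quot x h w e : h <> 0 -> Rabs ((x)/h - w) < e ->
  Rabs x <= Rabs h * (Rabs w + e).
Proof.
  intros Hh H.
  replace x with (h * (x/h)) by (field; auto).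
  rewrite Rabs_mult. apply Rmult_le_compat_l. apply Rabs_pos.
  replace (x/h) with ((x/h - w) + w) by ring.
  eapply Rle_trans. apply Rabs_triang. lra.
Qed.

Lemma term_bound A B C Dd K e1 : 0 <= K -> Rabs A < e1 -> Rabs B <= K -> Rabs C <= K -> Rabs Dd < e1 ->
  Rabs (A * B + C * Dd) <= 2 * K * e1.
Proof.
  intros HK HA HB HC HD.
  eapply Rle_trans. apply Rabs_triang. rewrite !Rabs_mult.
  assert (0 <= Rabs A) by apply Rabs_pos. assert (0 <= Rabs B) by apply Rabs_pos.
  assert (0 <= Rabs C) by apply Rabs_pos. assert (0 <= Rabs Dd) by apply Rabs_pos.
  nra.
Qed.

Lemma CR (O : V3 -> Prop) (f : V3 -> R) (D : nat -> V3 -> R) p gam w :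
  is_open O -> O p ->
  (forall y, O y -> forall i, (i < 3)%nat -> dir_deriv_at f y (ebasis i) (D i y)) ->
  (forall i, (i < 3)%nat -> cont_at (D i) p) ->
  has_velocity gam w -> gam 0 = p ->
  derivable_pt_lim (fun t => f (gam t)) 0 (sum3 (fun i => D i p * coord w i)).
Proof.
  intros HO Op HD HC Hv Hg0.
  destruct (HO p Op) as [dO [HdO HdO']].
  intros e He.
  set (K := 1 + (Rabs (c0 w) + Rabs (D 0%nat p)) + (Rabs (c1 w) + Rabs (D 1%nat p))
             + (Rabs (c2 w) + Rabs (D 2%nat p))).
  assert (HK : 1 <= K) by (unfold K; repeat match goal with |- context [Rabs ?x] =>
     let H := fresh in assert (H := Rabs_pos x); revert H; generalize (Rabs x); intros end; intros; lra).
  set (e1 := Rmin 1 (e / (7 * K))).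
  assert (He1 : 0 < e1) by (apply Rmin_pos; [lra| apply Rdiv_lt_0_compat; lra]).
  assert (He1a : e1 <= 1) by apply Rmin_l.
  assert (He1b : e1 <= e / (7*K)) by apply Rmin_r.
  destruct (HC 0%nat ltac:(lia) e1 He1) as [n0 [Hn0 Hn0']].
  destruct (HC 1%nat ltac:(lia) e1 He1) as [n1 [Hn1 Hn1']].
  destruct (HC 2%nat ltac:(lia) e1 He1) as [n2 [Hn2 Hn2']].
  destruct (cur_cont gam w 0 Hv ltac:(lia) e1 He1) as [d0 [Hd0 Hd0']].
  destruct (cur_cont gam w 1 Hv ltac:(lia) e1 He1) as [d1 [Hd1 Hd1']].
  destruct (cur_cont gam w 2 Hv ltac:(lia) e1 He1) as [d2 [Hd2 Hd2']].
  rewrite Hg0 in Hd0', Hd1', Hd2'. simpl in Hd0', Hd1', Hd2'.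
  set (m := Rmin dO (Rmin n0 (Rmin n1 n2))).
  assert (Hm : 0 < m) by (repeat apply Rmin_pos; lra).
  assert (Hm0 : m <= dO) by apply Rmin_l.
  assert (Hm1 : m <= n0) by (eapply Rle_trans; [apply Rmin_r| apply Rmin_l]).
  assert (Hm2 : m <= n1) by (eapply Rle_trans; [apply Rmin_r| eapply Rle_trans; [apply Rmin_r|apply Rmin_l]]).
  assert (Hm3 : m <= n2) by (eapply Rle_trans; [apply Rmin_r| eapply Rle_trans; [apply Rmin_r|apply Rmin_r]]).
  set (dl := Rmin (Rmin d0 (Rmin d1 d2)) (m / (3 * K))).
  assert (Hdl : 0 < dl) by (repeat apply Rmin_pos; try lra; apply Rdiv_lt_0_compat; lra).
  exists (mkposreal _ Hdl). intros h Hh Hhd. simpl in Hhd.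
  assert (Hh0 : Rabs h < d0) by (eapply Rlt_le_trans; [exact Hhd| eapply Rle_trans; [apply Rmin_l| apply Rmin_l]]).
  assert (Hh1 : Rabs h < d1) by (eapply Rlt_le_trans; [exact Hhd| eapply Rle_trans; [apply Rmin_l| eapply Rle_trans; [apply Rmin_r|apply Rmin_l]]]).
  assert (Hh2 : Rabs h < d2) by (eapply Rlt_le_trans; [exact Hhd| eapply Rle_trans; [apply Rmin_l| eapply Rle_trans; [apply Rmin_r|apply Rmin_r]]]).
  assert (Hh3 : Rabs h < m / (3*K)) by (eapply Rlt_le_trans; [exact Hhd| apply Rmin_r]).
  rewrite Rplus_0_l, Hg0.
  set (q := gam h).
  specialize (Hd0' h Hh Hh0). specialize (Hd1' h Hh Hh1). specialize (Hd2' h Hh Hh2).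
  fold q in Hd0', Hd1', Hd2'.
  set (u0 := c0 q - c0 p) in *. set (u1 := c1 q - c1 p) in *. set (u2 := c2 q - c2 p) in *.
  assert (Bu0 := bound_quot _ _ _ _ Hh Hd0').
  assert (Bu1 := bound_quot _ _ _ _ Hh Hd1').
  assert (Bu2 := bound_quot _ _ _ _ Hh Hd2').
  assert (Hsum : Rabs u0 + Rabs u1 + Rabs u2 < m).
  { assert (Rabs (c0 w) + e1 <= K) by (unfold K; repeat match goal with |- context [Rabs ?x] =>
     let H := fresh in assert (H := Rabs_pos x); revert H; generalize (Rabs x); intros end; intros; lra).
    assert (Rabs (c1 w) + e1 <= K) by (unfold K; repeat match goal with |- context [Rabs ?x] =>
     let H := fresh in assert (H := Rabs_pos x); revert H; generalize (Rabs x); intros end; intros; lra).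
    assert (Rabs (c2 w) + e1 <= K) by (unfold K; repeat match goal with |- context [Rabs ?x] =>
     let H := fresh in assert (H := Rabs_pos x); revert H; generalize (Rabs x); intros end; intros; lra).
    assert (Rabs h * (3 * K) < m).
    { assert (Ex : m / (3*K) * (3*K) = m) by (field; lra).
      assert (Hx : Rabs h * (3*K) < m / (3*K) * (3*K)) by (apply Rmult_lt_compat_r; lra).
      rewrite Ex in Hx; exact Hx. }
    assert (0 <= Rabs h) by apply Rabs_pos. nra. }
  assert (HOpt : forall a b c, Rabs a <= Rabs u0 -> Rabs b <= Rabs u1 -> Rabs c <= Rabs u2 ->
                 O (mk p a b c) /\ vnorm (vsub (mk p a b c) p) < m).
  { intros a b c Ha Hb Hc. assert (vnorm (vsub (mk p a b c) p) < m) by (rewrite mk_vnorm; lra).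
    split; auto. apply HdO'. lra. }
  assert (Ha0 : Rabs 0 <= Rabs u0) by (rewrite Rabs_R0; apply Rabs_pos).
  assert (Ha1 : Rabs 0 <= Rabs u1) by (rewrite Rabs_R0; apply Rabs_pos).
  assert (Ha2 : Rabs 0 <= Rabs u2) by (rewrite Rabs_R0; apply Rabs_pos).
  destruct (seg_step O f D (mk p 0 u1 u2) 0 u0) as [k0 [Hk0 Ek0]].
  { intros z Oz; apply HD; auto. }
  { intros c Hc; rewrite mk_e0. apply HOpt; lra. }
  destruct (seg_step O f D (mk p 0 0 u2) 1 u1) as [k1 [Hk1 Ek1]].
  { intros z Oz; apply HD; auto. }
  { intros c Hc; rewrite mk_e1. apply HOpt; lra. }
  destruct (seg_step O f D (mk p 0 0 0) 2 u2) as [k2 [Hk2 Ek2]].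
  { intros z Oz; apply HD; auto. }
  { intros c Hc; rewrite mk_e2. apply HOpt; lra. }
  rewrite !mk_e0 in Ek0. rewrite !mk_e1 in Ek1. rewrite !mk_e2 in Ek2.
  rewrite (mk_q p q). fold u0 u1 u2. rewrite (mk_p p) at 2.
  assert (Hdec : f (mk p u0 u1 u2) - f (mk p 0 0 0) =
     (f (mk p u0 u1 u2) - f (mk p 0 u1 u2)) + (f (mk p 0 u1 u2) - f (mk p 0 0 u2))
     + (f (mk p 0 0 u2) - f (mk p 0 0 0))) by ring.
  rewrite Hdec, Ek0, Ek1, Ek2. clear Hdec Ek0 Ek1 Ek2.
  destruct (HOpt k0 u1 u2) as [_ N0]; try lra.
  destruct (HOpt 0 k1 u2) as [_ N1]; try lra.
  destruct (HOpt 0 0 k2) as [_ N2]; try lra.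
  assert (C0 := Hn0' (mk p k0 u1 u2) ltac:(lra)). assert (C1 := Hn1' (mk p 0 k1 u2) ltac:(lra)). assert (C2 := Hn2' (mk p 0 0 k2) ltac:(lra)).
  unfold sum3; simpl.
  set (X0 := D 0%nat (mk p k0 u1 u2)) in *. set (X1 := D 1%nat (mk p 0 k1 u2)) in *.
  set (X2 := D 2%nat (mk p 0 0 k2)) in *.
  assert (E : (X0 * u0 + X1 * u1 + X2 * u2) / h -
     (D 0%nat p * c0 w + D 1%nat p * c1 w + D 2%nat p * c2 w) =
     ((X0 - D 0%nat p) * (u0/h) + D 0%nat p * (u0/h - c0 w))
   + ((X1 - D 1%nat p) * (u1/h) + D 1%nat p * (u1/h - c1 w))
   + ((X2 - D 2%nat p) * (u2/h) + D 2%nat p * (u2/h - c2 w))) by (field; auto).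
  rewrite E. clear E.
  assert (Q : forall u ww, Rabs (u/h - ww) < e1 -> Rabs ww + e1 <= K -> Rabs (u/h) <= K).
  { intros u ww H1 H2. replace (u/h) with ((u/h - ww) + ww) by ring.
    eapply Rle_trans. apply Rabs_triang. lra. }
  assert (T0 : Rabs ((X0 - D 0%nat p) * (u0/h) + D 0%nat p * (u0/h - c0 w)) <= 2*K*e1).
  { apply term_bound; try lra. apply (Q _ (c0 w)); auto.
    unfold K; repeat match goal with |- context [Rabs ?x] =>
     let H := fresh in assert (H := Rabs_pos x); revert H; generalize (Rabs x); intros end; intros; lra.
    unfold K; repeat match goal with |- context [Rabs ?x] =>
     let H := fresh in assert (H := Rabs_pos x); revert H; generalize (Rabs x); intros end; intros; lra. }
  assert (T1 : Rabs ((X1 - D 1%nat p) * (u1/h) + D 1%nat p * (u1/h - c1 w)) <= 2*K*e1).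
  { apply term_bound; try lra. apply (Q _ (c1 w)); auto.
    unfold K; repeat match goal with |- context [Rabs ?x] =>
     let H := fresh in assert (H := Rabs_pos x); revert H; generalize (Rabs x); intros end; intros; lra.
    unfold K; repeat match goal with |- context [Rabs ?x] =>
     let H := fresh in assert (H := Rabs_pos x); revert H; generalize (Rabs x); intros end; intros; lra. }
  assert (T2 : Rabs ((X2 - D 2%nat p) * (u2/h) + D 2%nat p * (u2/h - c2 w)) <= 2*K*e1).
  { apply term_bound; try lra. apply (Q _ (c2 w)); auto.
    unfold K; repeat match goal with |- context [Rabs ?x] =>
     let H := fresh in assert (H := Rabs_pos x); revert H; generalize (Rabs x); intros end; intros; lra.
    unfold K; repeat match goal with |- context [Rabs ?x] =>
     let H := fresh in assert (H := Rabs_pos x); revert H; generalize (Rabs x); intros end; intros; lra. }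
  eapply Rle_lt_trans. eapply Rle_trans. apply Rabs_triang. apply Rplus_le_compat_r. apply Rabs_triang.
  assert (6 * K * e1 < e).
  { assert (K * e1 <= e / 7).
    { apply Rle_trans with (K * (e / (7*K))). apply Rmult_le_compat_l; lra.
      right; field; lra. }
    lra. }
  lra.
Qed.


Lemma dd_plus f g y v a b : dir_deriv_at f y v a -> dir_deriv_at g y v b ->
  dir_deriv_at (fun z => f z + g z) y v (a + b).
Proof. unfold dir_deriv_at; intros H1 H2. exact (derivable_pt_lim_plus _ _ _ _ _ H1 H2). Qed.

Lemma dd_mult f g y v a b : dir_deriv_at f y v a -> dir_deriv_at g y v b ->
  dir_deriv_at (fun z => f z * g z) y v (a * g y + f y * b).
Proof.
  unfold dir_deriv_at; intros H1 H2.
  assert (H := derivable_pt_lim_mult _ _ _ _ _ H1 H2). cbv beta in H.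
  rewrite vadd_scale0 in H. exact H.
Qed.

Lemma dd_const c y v : dir_deriv_at (fun _ => c) y v 0.
Proof. unfold dir_deriv_at. apply derivable_pt_lim_const. Qed.

Lemma vnorm_pos u : 0 <= vnorm u.
Proof. unfold vnorm. assert (H0:=Rabs_pos (c0 u)). assert (H1:=Rabs_pos (c1 u)). assert (H2:=Rabs_pos (c2 u)). lra. Qed.

Lemma vnorm_line y t v : vnorm (vsub (vadd y (vscale t v)) y) = Rabs t * vnorm v.
Proof.
  unfold vnorm, vsub, vadd, vscale; simpl.
  replace (c0 y + t * c0 v + -1 * c0 y) with (t * c0 v) by ring.
  replace (c1 y + t * c1 v + -1 * c1 y) with (t * c1 v) by ring.
  replace (c2 y + t * c2 v + -1 * c2 y) with (t * c2 v) by ring.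
  rewrite !Rabs_mult. ring.
Qed.

Lemma vsub_self y : vnorm (vsub y y) = 0.
Proof. unfold vnorm, vsub, vadd, vscale; simpl.
  replace (c0 y + -1 * c0 y) with 0 by ring. replace (c1 y + -1 * c1 y) with 0 by ring.
  replace (c2 y + -1 * c2 y) with 0 by ring. rewrite Rabs_R0; ring. Qed.

Lemma dd_ext_loc f g y v l d : 0 < d ->
  (forall z, vnorm (vsub z y) < d -> f z = g z) ->
  dir_deriv_at f y v l -> dir_deriv_at g y v l.
Proof.
  intros Hd Heq H. unfold dir_deriv_at in *.
  assert (Hp : 0 < d / (vnorm v + 1)) by (apply Rdiv_lt_0_compat; auto; assert (H0:=vnorm_pos v); lra).
  apply (dpl_ext_loc (fun t => f (vadd y (vscale t v))) _ 0 l _ Hp); auto.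
  intros t Ht. apply Heq. rewrite vnorm_line. rewrite Rminus_0_r in Ht.
  assert (H0:=vnorm_pos v). assert (H1 := Rabs_pos t).
  apply Rle_lt_trans with (Rabs t * (vnorm v + 1)). nra.
  assert (Rabs t * (vnorm v + 1) < d / (vnorm v + 1) * (vnorm v + 1)) by (apply Rmult_lt_compat_r; lra).
  replace (d / (vnorm v + 1) * (vnorm v + 1)) with d in H2 by (field; lra). exact H2.
Qed.

Lemma cont_plus f g x : cont_at f x -> cont_at g x -> cont_at (fun z => f z + g z) x.
Proof.
  intros Hf Hg e He. destruct (Hf (e/2) ltac:(lra)) as [d1 [Hd1 H1]].
  destruct (Hg (e/2) ltac:(lra)) as [d2 [Hd2 H2]].
  exists (Rmin d1 d2); split. apply Rmin_pos; auto.
  intros y Hy. assert (A := H1 y (Rlt_le_trans _ _ _ Hy (Rmin_l _ _))).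
  assert (B := H2 y (Rlt_le_trans _ _ _ Hy (Rmin_r _ _))).
  replace (f y + g y - (f x + g x)) with ((f y - f x) + (g y - g x)) by ring.
  eapply Rle_lt_trans. apply Rabs_triang. lra.
Qed.

Lemma cont_mult f g x : cont_at f x -> cont_at g x -> cont_at (fun z => f z * g z) x.
Proof.
  intros Hf Hg e He.
  set (K := Rabs (f x) + Rabs (g x) + 1).
  assert (HK : 1 <= K) by (unfold K; assert (H0:=Rabs_pos (f x)); assert (H1:=Rabs_pos (g x)); lra).
  set (e1 := Rmin 1 (e / (3*K))).
  assert (He1 : 0 < e1) by (apply Rmin_pos; [lra| apply Rdiv_lt_0_compat; lra]).
  assert (He1a : e1 <= 1) by apply Rmin_l. assert (He1b : e1 <= e/(3*K)) by apply Rmin_r.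
  destruct (Hf e1 He1) as [d1 [Hd1 H1]]. destruct (Hg e1 He1) as [d2 [Hd2 H2]].
  exists (Rmin d1 d2); split. apply Rmin_pos; auto.
  intros y Hy. assert (A := H1 y (Rlt_le_trans _ _ _ Hy (Rmin_l _ _))).
  assert (B := H2 y (Rlt_le_trans _ _ _ Hy (Rmin_r _ _))).
  replace (f y * g y - f x * g x) with ((f y - f x) * g y + f x * (g y - g x)) by ring.
  assert (Hgy : Rabs (g y) <= K).
  { replace (g y) with ((g y - g x) + g x) by ring. eapply Rle_trans. apply Rabs_triang.
    unfold K; assert (H0:=Rabs_pos (f x)); lra. }
  assert (Hfx : Rabs (f x) <= K) by (unfold K; assert (H0:=Rabs_pos (g x)); lra).
  eapply Rle_lt_trans. apply term_bound with (K := K) (e1 := e1); auto; lra.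
  assert (K * e1 <= e / 3).
  { apply Rle_trans with (K * (e/(3*K))). apply Rmult_le_compat_l; lra. right; field; lra. }
  lra.
Qed.

Lemma cont_const c x : cont_at (fun _ => c) x.
Proof. intros e He; exists 1; split; [lra|]; intros; replace (c - c) with 0 by ring; rewrite Rabs_R0; lra. Qed.

Lemma cont_ext_loc f g x d : 0 < d -> (forall z, vnorm (vsub z x) < d -> f z = g z) ->
  cont_at f x -> cont_at g x.
Proof.
  intros Hd Heq H e He. destruct (H e He) as [d1 [Hd1 H1]].
  exists (Rmin d d1); split. apply Rmin_pos; auto.
  intros y Hy. rewrite <- (Heq y), <- (Heq x).
  apply H1. eapply Rlt_le_trans; [exact Hy| apply Rmin_r].
  rewrite vsub_self; lra. eapply Rlt_le_trans; [exact Hy| apply Rmin_l].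
Qed.

Lemma curve_near gam w : has_velocity gam w ->
  forall d, 0 < d -> exists eta, 0 < eta /\ forall t, Rabs t < eta -> vnorm (vsub (gam t) (gam 0)) < d.
Proof.
  intros Hv d Hd.
  destruct (cur_cont gam w 0 Hv ltac:(lia) 1 ltac:(lra)) as [d0 [Hd0 H0]].
  destruct (cur_cont gam w 1 Hv ltac:(lia) 1 ltac:(lra)) as [d1 [Hd1 H1]].
  destruct (cur_cont gam w 2 Hv ltac:(lia) 1 ltac:(lra)) as [d2 [Hd2 H2]].
  simpl in H0, H1, H2.
  set (K := Rabs (c0 w) + 1 + (Rabs (c1 w) + 1) + (Rabs (c2 w) + 1)).
  assert (HK : 1 <= K) by (unfold K; assert (A0:=Rabs_pos (c0 w)); assert (A1:=Rabs_pos (c1 w)); assert (A2:=Rabs_pos (c2 w)); lra).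
  exists (Rmin (Rmin d0 (Rmin d1 d2)) (d / K)). split.
  repeat apply Rmin_pos; auto. apply Rdiv_lt_0_compat; lra.
  intros t Ht. destruct (Req_dec t 0) as [->|Ht0].
  - rewrite vsub_self; lra.
  - assert (T0 : Rabs t < d0) by (eapply Rlt_le_trans; [exact Ht| eapply Rle_trans; [apply Rmin_l| apply Rmin_l]]).
    assert (T1 : Rabs t < d1) by (eapply Rlt_le_trans; [exact Ht| eapply Rle_trans; [apply Rmin_l| eapply Rle_trans; [apply Rmin_r|apply Rmin_l]]]).
    assert (T2 : Rabs t < d2) by (eapply Rlt_le_trans; [exact Ht| eapply Rle_trans; [apply Rmin_l| eapply Rle_trans; [apply Rmin_r|apply Rmin_r]]]).
    assert (T3 : Rabs t < d / K) by (eapply Rlt_le_trans; [exact Ht| apply Rmin_r]).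
    assert (B0 := bound_quot _ _ _ _ Ht0 (H0 t Ht0 T0)).
    assert (B1 := bound_quot _ _ _ _ Ht0 (H1 t Ht0 T1)).
    assert (B2 := bound_quot _ _ _ _ Ht0 (H2 t Ht0 T2)).
    unfold vnorm, vsub, vadd, vscale; simpl.
    replace (c0 (gam t) + -1 * c0 (gam 0)) with (c0 (gam t) - c0 (gam 0)) by ring.
    replace (c1 (gam t) + -1 * c1 (gam 0)) with (c1 (gam t) - c1 (gam 0)) by ring.
    replace (c2 (gam t) + -1 * c2 (gam 0)) with (c2 (gam t) - c2 (gam 0)) by ring.
    assert (Rabs t * K < d).
    { assert (Hx : Rabs t * K < d / K * K) by (apply Rmult_lt_compat_r; lra).
      replace (d / K * K) with d in Hx by (field; lra). exact Hx. }
    unfold K in *. nra.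
Qed.

Lemma kill (O : V3 -> Prop) f D (N : V3 -> Prop) y w :
  is_open O -> O y ->
  (forall z, O z -> forall i, (i < 3)%nat -> dir_deriv_at f z (ebasis i) (D i z)) ->
  (forall i, (i < 3)%nat -> cont_at (D i) y) ->
  (forall z, O z -> N z -> f z = 0) ->
  tangent N y w -> sum3 (fun i => D i y * coord w i) = 0.
Proof.
  intros HO Oy HD HC H0 [gam [[HN Hg0] Hv]].
  assert (Hd := CR O f D y gam w HO Oy HD HC Hv Hg0).
  destruct (HO y Oy) as [d [Hd0 Hd1]].
  destruct (curve_near gam w Hv d Hd0) as [eta [Heta H]].
  rewrite Hg0 in H.
  assert (Hz : derivable_pt_lim (fun _ => 0) 0 (sum3 (fun i => D i y * coord w i))).
  { apply (dpl_ext_loc (fun t => f (gam t)) _ 0 _ eta Heta); auto.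
    intros t Ht. rewrite Rminus_0_r in Ht. apply H0; auto. }
  exact (uniqueness_limite _ _ _ _ Hz (derivable_pt_lim_const 0 0)).
Qed.


Lemma vnorm_add a b : vnorm (vadd a b) <= vnorm a + vnorm b.
Proof. unfold vnorm, vadd; simpl.
  assert (H0 := Rabs_triang (c0 a) (c0 b)). assert (H1 := Rabs_triang (c1 a) (c1 b)).
  assert (H2 := Rabs_triang (c2 a) (c2 b)). lra. Qed.

Lemma vnorm_scale t v : vnorm (vscale t v) = Rabs t * vnorm v.
Proof. unfold vnorm, vscale; simpl. rewrite !Rabs_mult. ring. Qed.

Lemma vnorm_e i : vnorm (ebasis i) = 1.
Proof. unfold vnorm; destruct i as [|[|]]; simpl; rewrite ?Rabs_R0, ?Rabs_R1; ring. Qed.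

Module SWm.
Section SWsec.
Import Coquelicot.Coquelicot.

Variables (O : V3 -> Prop) (x : V3) (i j : nat).
Definition P2d u v := vadd (vadd x (vscale u (ebasis i))) (vscale v (ebasis j)).

Lemma P2d_swap u v : P2d u v = vadd (vadd x (vscale v (ebasis j))) (vscale u (ebasis i)).
Proof. unfold P2d; destruct x; unfold vadd, vscale; simpl; f_equal; ring. Qed.

Lemma P2d_0 : P2d 0 0 = x.
Proof. unfold P2d; destruct x; unfold vadd, vscale; simpl; f_equal; ring. Qed.

Lemma P2d_norm u v : vnorm (vsub (P2d u v) x) <= Rabs u + Rabs v.
Proof.
  replace (vsub (P2d u v) x) with (vadd (vscale u (ebasis i)) (vscale v (ebasis j))).
  eapply Rle_trans. apply vnorm_add. rewrite !vnorm_scale, !vnorm_e. lra.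
  unfold P2d; destruct x; unfold vsub, vadd, vscale; simpl; f_equal; ring.
Qed.

Lemma Lj G u v : (exists l, dir_deriv_at G (P2d u v) (ebasis j) l) ->
  is_derive (fun t => G (P2d u t)) v (partial j G (P2d u v)).
Proof.
  intro H. apply (proj2 (is_derive_Reals _ _ _)). unfold P2d. apply (proj1 (dd_shift _ _ _ _ _)).
  apply dd_spec. exact H.
Qed.

Lemma Li G u v : (exists l, dir_deriv_at G (P2d u v) (ebasis i) l) ->
  is_derive (fun z => G (P2d z v)) u (partial i G (P2d u v)).
Proof.
  intro H. apply (proj2 (is_derive_Reals _ _ _)).
  assert (K : derivable_pt_lim (fun z => G (vadd (vadd x (vscale v (ebasis j))) (vscale z (ebasis i)))) u
                 (partial i G (P2d u v))).
  { apply (proj1 (dd_shift _ _ _ _ _)). rewrite <- P2d_swap. apply dd_spec. exact H. }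
  assert (Ef : (fun z => G (vadd (vadd x (vscale v (ebasis j))) (vscale z (ebasis i)))) = (fun z => G (P2d z v))).
  { apply functional_extensionality; intro z; now rewrite P2d_swap. }
  rewrite Ef in K. exact K.
Qed.

Lemma loc_of u (d : R) (P : R -> Prop) : 0 < d -> (forall z, Rabs (z - u) < d -> P z) -> locally u P.
Proof.
  intros Hd H. exists (mkposreal d Hd). intros z Hz. apply H.
  unfold ball in Hz; simpl in Hz. unfold AbsRing_ball, abs, minus, plus, opp in Hz; simpl in Hz. exact Hz.
Qed.

Lemma schwarz3 F : is_open O -> O x ->
  (forall y, O y -> forall k, (k < 3)%nat -> exists l, dir_deriv_at F y (ebasis k) l) ->
  (forall y, O y -> forall k m, (k < 3)%nat -> (m < 3)%nat ->
      exists l, dir_deriv_at (partial k F) y (ebasis m) l) ->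
  (i < 3)%nat -> (j < 3)%nat ->
  cont_at (partial i (partial j F)) x -> cont_at (partial j (partial i F)) x ->
  partial i (partial j F) x = partial j (partial i F) x.
Proof.
  intros HO Ox H1 H2 Hi Hj C1 C2.
  destruct (HO x Ox) as [d [Hd HdO]].
  assert (Hbox : forall u v, Rabs u < d/2 -> Rabs v < d/2 -> O (P2d u v)).
  { intros u v Hu Hv. apply HdO. eapply Rle_lt_trans. apply P2d_norm. lra. }
  assert (E1 : forall u v, Rabs u < d/4 -> Rabs v < d/4 ->
     is_derive (fun z => Derive (fun t => F (P2d z t)) v) u (partial i (partial j F) (P2d u v))).
  { intros u v Hu Hv.
    apply (is_derive_ext_loc (fun z => partial j F (P2d z v))).
    - apply (loc_of u (d/4)). lra. intros z Hz.
      symmetry. apply is_derive_unique. apply Lj. apply H1; auto.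
      apply Hbox. assert (Rabs z <= Rabs (z - u) + Rabs u).
      { replace z with ((z - u) + u) at 1 by ring. apply Rabs_triang. } lra. lra.
    - apply Li. apply H2; auto. apply Hbox; lra. }
  assert (E2 : forall u v, Rabs u < d/4 -> Rabs v < d/4 ->
     is_derive (fun z => Derive (fun t => F (P2d t z)) u) v (partial j (partial i F) (P2d u v))).
  { intros u v Hu Hv.
    apply (is_derive_ext_loc (fun z => partial i F (P2d u z))).
    - apply (loc_of v (d/4)). lra. intros z Hz.
      symmetry. apply is_derive_unique. apply Li. apply H1; auto.
      apply Hbox. lra. assert (Rabs z <= Rabs (z - v) + Rabs v).
      { replace z with ((z - v) + v) at 1 by ring. apply Rabs_triang. } lra.
    - apply Lj. apply H2; auto. apply Hbox; lra. }
  assert (Hd4 : 0 < d/4) by lra.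
  assert (S := Schwarz (fun u v => F (P2d u v)) 0 0).
  cbv beta in S.
  rewrite <- P2d_0.
  rewrite <- (is_derive_unique _ _ _ (E1 0 0 ltac:(rewrite Rabs_R0; lra) ltac:(rewrite Rabs_R0; lra))).
  rewrite <- (is_derive_unique _ _ _ (E2 0 0 ltac:(rewrite Rabs_R0; lra) ltac:(rewrite Rabs_R0; lra))).
  apply S; clear S.
  - exists (mkposreal _ Hd4). intros u v Hu Hv; simpl in Hu, Hv.
    rewrite Rminus_0_r in Hu, Hv.
    split; [|split; [|split]].
    + eexists. apply Li. apply H1; auto. apply Hbox; lra.
    + eexists. apply Lj. apply H1; auto. apply Hbox; lra.
    + eexists. apply E1; auto.
    + eexists. apply E2; auto.
  - intro eps. destruct (C1 eps (cond_pos eps)) as [e [He HC]].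
    assert (Hm : 0 < Rmin (d/4) (e/2)) by (apply Rmin_pos; lra).
    exists (mkposreal _ Hm). intros u v Hu Hv; simpl in Hu, Hv. rewrite Rminus_0_r in Hu, Hv.
    assert (Hu1 : Rabs u < d/4) by (eapply Rlt_le_trans; [exact Hu| apply Rmin_l]).
    assert (Hv1 : Rabs v < d/4) by (eapply Rlt_le_trans; [exact Hv| apply Rmin_l]).
    assert (Hu2 : Rabs u < e/2) by (eapply Rlt_le_trans; [exact Hu| apply Rmin_r]).
    assert (Hv2 : Rabs v < e/2) by (eapply Rlt_le_trans; [exact Hv| apply Rmin_r]).
    assert (Ea : Derive (fun z : R => Derive (fun t : R => F (P2d z t)) v) u = _) by exact (is_derive_unique _ _ _ (E1 u v Hu1 Hv1)).
    assert (Eb : Derive (fun z : R => Derive (fun t : R => F (P2d z t)) 0) 0 = _) by exact (is_derive_unique _ _ _ (E1 0 0 ltac:(rewrite Rabs_R0; lra) ltac:(rewrite Rabs_R0; lra))).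
    rewrite Ea, Eb.
    rewrite P2d_0. apply HC. eapply Rle_lt_trans. apply P2d_norm. lra.
  - intro eps. destruct (C2 eps (cond_pos eps)) as [e [He HC]].
    assert (Hm : 0 < Rmin (d/4) (e/2)) by (apply Rmin_pos; lra).
    exists (mkposreal _ Hm). intros u v Hu Hv; simpl in Hu, Hv. rewrite Rminus_0_r in Hu, Hv.
    assert (Hu1 : Rabs u < d/4) by (eapply Rlt_le_trans; [exact Hu| apply Rmin_l]).
    assert (Hv1 : Rabs v < d/4) by (eapply Rlt_le_trans; [exact Hv| apply Rmin_l]).
    assert (Hu2 : Rabs u < e/2) by (eapply Rlt_le_trans; [exact Hu| apply Rmin_r]).
    assert (Hv2 : Rabs v < e/2) by (eapply Rlt_le_trans; [exact Hv| apply Rmin_r]).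
    assert (Ea : Derive (fun z : R => Derive (fun t : R => F (P2d t z)) u) v = _) by exact (is_derive_unique _ _ _ (E2 u v Hu1 Hv1)).
    assert (Eb : Derive (fun z : R => Derive (fun t : R => F (P2d t z)) 0) 0 = _) by exact (is_derive_unique _ _ _ (E2 0 0 ltac:(rewrite Rabs_R0; lra) ltac:(rewrite Rabs_R0; lra))).
    rewrite Ea, Eb.
    rewrite P2d_0. apply HC. eapply Rle_lt_trans. apply P2d_norm. lra.
Qed.
End SWsec.
End SWm.


Lemma Ck_mono k (S T : V3 -> Prop) f : (forall y, T y -> S y) -> Ck k S f -> Ck k T f.
Proof.
  revert f; induction k as [|k IH]; intros f HTS H; simpl in *.
  - intros y Ty; apply H; auto.
  - destruct H as [H1 [H2 H3]]. split; [|split].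
    + intros y Ty; apply H1; auto.
    + intros y Ty; apply H2; auto.
    + intros i Hi; apply IH; auto.
Qed.

Lemma smooth_mono (S T : V3 -> Prop) f : (forall y, T y -> S y) -> smooth S f -> smooth T f.
Proof. intros H Hs k. apply (Ck_mono k S); auto. Qed.

Lemma smooth_facts S f : smooth S f ->
  (forall y, S y -> cont_at f y) /\
  (forall y, S y -> forall i, (i < 3)%nat -> dir_deriv_at f y (ebasis i) (partial i f y)) /\
  (forall i, (i < 3)%nat -> forall y, S y -> cont_at (partial i f) y) /\
  (forall i, (i < 3)%nat -> forall y, S y -> forall m, (m < 3)%nat ->
      exists l, dir_deriv_at (partial i f) y (ebasis m) l) /\
  (forall i m, (i < 3)%nat -> (m < 3)%nat -> forall y, S y -> cont_at (partial m (partial i f)) y).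
Proof.
  intro H. destruct (H 2%nat) as [A [B C]].
  split; auto. split. intros y Sy i Hi. apply dd_spec. apply B; auto.
  split. intros i Hi y Sy. destruct (C i Hi) as [C1 _]. auto.
  split. intros i Hi y Sy m Hm. destruct (C i Hi) as [_ [C2 _]]. auto.
  intros i m Hi Hm y Sy. destruct (C i Hi) as [_ [_ C3]]. apply C3; auto.
Qed.

Lemma open_inter (A B : V3 -> Prop) : is_open A -> is_open B -> is_open (fun y => A y /\ B y).
Proof.
  intros HA HB y [Ay By]. destruct (HA y Ay) as [d1 [Hd1 H1]]. destruct (HB y By) as [d2 [Hd2 H2]].
  exists (Rmin d1 d2); split. apply Rmin_pos; auto.
  intros z Hz; split. apply H1; eapply Rlt_le_trans; [exact Hz| apply Rmin_l].
  apply H2; eapply Rlt_le_trans; [exact Hz| apply Rmin_r].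
Qed.

Lemma dd_unique f y v l1 l2 : dir_deriv_at f y v l1 -> dir_deriv_at f y v l2 -> l1 = l2.
Proof. unfold dir_deriv_at; apply uniqueness_limite. Qed.

Lemma dpl_cont f l : derivable_pt_lim f 0 l ->
  forall e, 0 < e -> exists d, 0 < d /\ forall t, Rabs t < d -> Rabs (f t - f 0) < e.
Proof.
  intros H e He. destruct (H 1 ltac:(lra)) as [d1 Hd1].
  assert (Hp : 0 < Rmin d1 (e / (Rabs l + 2))).
  { apply Rmin_pos. apply cond_pos. apply Rdiv_lt_0_compat; auto. assert (H0:=Rabs_pos l); lra. }
  exists (Rmin d1 (e / (Rabs l + 2))); split; auto.
  intros t Ht. destruct (Req_dec t 0) as [->|Ht0].
  - replace (f 0 - f 0) with 0 by ring; rewrite Rabs_R0; lra.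
  - assert (T1 : Rabs t < d1) by (eapply Rlt_le_trans; [exact Ht| apply Rmin_l]).
    assert (T2 : Rabs t < e / (Rabs l + 2)) by (eapply Rlt_le_trans; [exact Ht| apply Rmin_r]).
    specialize (Hd1 t Ht0 T1). rewrite Rplus_0_l in Hd1.
    assert (B := bound_quot _ _ _ _ Ht0 Hd1).
    assert (H0:=Rabs_pos l). assert (H1:=Rabs_pos t).
    assert (Rabs t * (Rabs l + 2) < e).
    { assert (Hx : Rabs t * (Rabs l + 2) < e / (Rabs l + 2) * (Rabs l + 2)) by (apply Rmult_lt_compat_r; lra).
      replace (e / (Rabs l + 2) * (Rabs l + 2)) with e in Hx by (field; lra). exact Hx. }
    nra.
Qed.

Definition det3 a b c d e f g h i := a * (e * i - f * h) - b * (d * i - f * g) + c * (d * h - e * g).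

Lemma LA (d0 d1 d2 u0 u1 u2 v0 v1 v2 w0 w1 w2 a0 a1 a2 r0 r1 r2 s0 s1 s2 : R) :
  a0 * u0 + a1 * u1 + a2 * u2 = 1 ->
  a0 * v0 + a1 * v1 + a2 * v2 = 0 ->
  a0 * w0 + a1 * w1 + a2 * w2 = 0 ->
  r0 * v0 + r1 * v1 + r2 * v2 = 1 ->
  r0 * w0 + r1 * w1 + r2 * w2 = 0 ->
  s0 * v0 + s1 * v1 + s2 * v2 = 0 ->
  s0 * w0 + s1 * w1 + s2 * w2 = 1 ->
  d0 * u0 + d1 * u1 + d2 * u2 = 0 ->
  d0 * v0 + d1 * v1 + d2 * v2 = 0 ->
  d0 * w0 + d1 * w1 + d2 * w2 = 0 ->
  d0 = 0 /\ d1 = 0 /\ d2 = 0.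
Proof.
  intros A0 A1 A2 R1 R2 S1 S2 D0 D1 D2.
  set (Dt := det3 u0 v0 w0 u1 v1 w1 u2 v2 w2).
  assert (M : det3 a0 a1 a2 r0 r1 r2 s0 s1 s2 * Dt =
    det3 (a0 * u0 + a1 * u1 + a2 * u2) (a0 * v0 + a1 * v1 + a2 * v2) (a0 * w0 + a1 * w1 + a2 * w2)
         (r0 * u0 + r1 * u1 + r2 * u2) (r0 * v0 + r1 * v1 + r2 * v2) (r0 * w0 + r1 * w1 + r2 * w2)
         (s0 * u0 + s1 * u1 + s2 * u2) (s0 * v0 + s1 * v1 + s2 * v2) (s0 * w0 + s1 * w1 + s2 * w2))
    by (unfold Dt, det3; ring).
  rewrite A0, A1, A2, R1, R2, S1, S2 in M. unfold det3 at 2 in M.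
  assert (HD : Dt <> 0) by (intro E; rewrite E in M; lra).
  assert (I0 : Dt * d0 = (d0 * u0 + d1 * u1 + d2 * u2) * (v1 * w2 - v2 * w1)
     + (d0 * v0 + d1 * v1 + d2 * v2) * (w1 * u2 - w2 * u1) + (d0 * w0 + d1 * w1 + d2 * w2) * (u1 * v2 - u2 * v1))
    by (unfold Dt, det3; ring).
  assert (I1 : Dt * d1 = (d0 * u0 + d1 * u1 + d2 * u2) * (v2 * w0 - v0 * w2)
     + (d0 * v0 + d1 * v1 + d2 * v2) * (w2 * u0 - w0 * u2) + (d0 * w0 + d1 * w1 + d2 * w2) * (u2 * v0 - u0 * v2))
    by (unfold Dt, det3; ring).
  assert (I2 : Dt * d2 = (d0 * u0 + d1 * u1 + d2 * u2) * (v0 * w1 - v1 * w0)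
     + (d0 * v0 + d1 * v1 + d2 * v2) * (w0 * u1 - w1 * u0) + (d0 * w0 + d1 * w1 + d2 * w2) * (u0 * v1 - u1 * v0))
    by (unfold Dt, det3; ring).
  rewrite D0, D1, D2 in I0, I1, I2.
  repeat split.
  - apply (Rmult_eq_reg_l Dt); auto. lra.
  - apply (Rmult_eq_reg_l Dt); auto. lra.
  - apply (Rmult_eq_reg_l Dt); auto. lra.
Qed.


Definition phi F (X : VF) y := sum3 (fun i => coord (X y) i * partial i F y).
Definition Dphi F (X : VF) j y := sum3 (fun i =>
   partial j (fun z => coord (X z) i) y * partial i F y + coord (X y) i * partial j (partial i F) y).

Lemma phi_deriv F X y j :
  (forall i, (i < 3)%nat -> dir_deriv_at (fun z => coord (X z) i) y (ebasis j) (partial j (fun z => coord (X z) i) y)) ->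
  (forall i, (i < 3)%nat -> dir_deriv_at (partial i F) y (ebasis j) (partial j (partial i F) y)) ->
  dir_deriv_at (phi F X) y (ebasis j) (Dphi F X j y).
Proof.
  intros H1 H2. unfold phi, Dphi, sum3.
  repeat apply dd_plus; apply dd_mult; first [apply H1 | apply H2]; lia.
Qed.

Lemma Dphi_cont F X y :
  (forall i, (i < 3)%nat -> cont_at (fun z => coord (X z) i) y) ->
  (forall i j, (i < 3)%nat -> (j < 3)%nat -> cont_at (partial j (fun z => coord (X z) i)) y) ->
  (forall i, (i < 3)%nat -> cont_at (partial i F) y) ->
  (forall i j, (i < 3)%nat -> (j < 3)%nat -> cont_at (partial j (partial i F)) y) ->
  forall j, (j < 3)%nat -> cont_at (Dphi F X j) y.
Proof.
  intros H1 H2 H3 H4 j Hj. unfold Dphi, sum3.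
  repeat apply cont_plus; apply cont_mult;
    first [apply H1 | apply H2 | apply H3 | apply H4]; lia.
Qed.

Lemma bracket_phi F X Z x :
  (forall i j, (i < 3)%nat -> (j < 3)%nat -> partial i (partial j F) x = partial j (partial i F) x) ->
  sum3 (fun j => coord (X x) j * Dphi F Z j x) - sum3 (fun j => coord (Z x) j * Dphi F X j x)
  = phi F (bracket X Z) x.
Proof.
  intro S.
  assert (S01 := S 0%nat 1%nat ltac:(lia) ltac:(lia)).
  assert (S02 := S 0%nat 2%nat ltac:(lia) ltac:(lia)).
  assert (S12 := S 1%nat 2%nat ltac:(lia) ltac:(lia)).
  unfold phi, Dphi, bracket, bracket_comp, vf_apply, sum3. cbn [coord].
  cbn [Defs.c0 Defs.c1 Defs.c2]. rewrite S01, S02, S12. ring.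
Qed.

Lemma lin_comb_r (w : V3) (c : nat -> R) (fk : nat -> V3) (P : nat -> R) :
  (forall m, (m < 3)%nat -> coord w m = sum3 (fun k => c k * coord (fk k) m)) ->
  sum3 (fun i => coord w i * P i) = sum3 (fun k => c k * sum3 (fun i => coord (fk k) i * P i)).
Proof.
  intro H. unfold sum3 at 1.
  rewrite (H 0%nat), (H 1%nat), (H 2%nat) by lia. unfold sum3. ring.
Qed.

Lemma lin_comb_l (w : V3) (c : nat -> R) (fk : nat -> V3) (P : nat -> R) :
  (forall m, (m < 3)%nat -> coord w m = sum3 (fun k => c k * coord (fk k) m)) ->
  sum3 (fun i => P i * coord w i) = sum3 (fun k => c k * sum3 (fun i => P i * coord (fk k) i)).
Proof.
  intro H. unfold sum3 at 1.
  rewrite (H 0%nat), (H 1%nat), (H 2%nat) by lia. unfold sum3. ring.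
Qed.

Definition Ea (al0 : Form) (Z : VF) j x := sum3 (fun i =>
  partial j (fun z => coord (al0 z) i) x * coord (Z x) i + coord (al0 x) i * partial j (fun z => coord (Z z) i) x).

Lemma dA_bracket al0 X Z x :
  dA al0 x (X x) (Z x) = sum3 (fun j => coord (X x) j * Ea al0 Z j x)
     - sum3 (fun j => coord (Z x) j * Ea al0 X j x) - form_eval al0 x (bracket X Z x).
Proof.
  unfold dA, Ea, form_eval, bracket, bracket_comp, vf_apply, sum3. cbn [coord Defs.c0 Defs.c1 Defs.c2]. ring.
Qed.


Theorem mainTheorem5
  (U : V3 -> Prop) (al0 : Form) (g : V3 -> nat -> nat -> R) (v0 : VF)
  (N : V3 -> Prop) (W : V3 -> Prop) (v1 v2 : VF)
  (A : nat -> nat -> nat -> V3 -> R) (a : V3 -> R) :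
  sR_contact U al0 g v0 ->
  is_surface N ->
  (forall y, N y -> U y) ->
  (forall y, W y -> U y) ->
  adapted_frame W N al0 g v1 v2 ->
  structure_functions W v0 v1 v2 A ->
  is_DOT W N al0 v0 v2 a ->
  forall x, W x -> N x -> regular N al0 x ->
  exists v1a : R,
    derivN N a x (v1 x) v1a /\
    v1a - a x ^ 2 = - A 0%nat 1%nat 2%nat x - a x * A 1%nat 2%nat 2%nat x.
Proof.
  intros HsR HS HNU HWU HAF HSF HDOT x Wx Nx Rx.
  destruct HsR as [HUo [Hal [_ [_ [Hgsym [_ [_ [Hv0s Hreeb]]]]]]]].
  destruct HAF as [HWo [Hv1s [Hv2s [Hfr Htan1]]]].
  destruct (HS x Nx) as [O [F [HOo [Ox [HFs [Hnz HNF]]]]]].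
  assert (Ux : U x) by auto.
  destruct (smooth_facts O F HFs) as [FC [FD [FPC [FPD FPPC]]]].
  set (Om := fun y => O y /\ W y).
  assert (HOmo : is_open Om) by (apply open_inter; auto).
  assert (Omx : Om x) by (split; auto).
  assert (VF_facts : forall X : VF, smoothVF W X ->
     (forall i, (i<3)%nat -> forall y, W y -> cont_at (fun z => coord (X z) i) y) /\
     (forall i j, (i<3)%nat -> (j<3)%nat -> forall y, W y ->
        dir_deriv_at (fun z => coord (X z) i) y (ebasis j) (partial j (fun z => coord (X z) i) y)) /\
     (forall i j, (i<3)%nat -> (j<3)%nat -> forall y, W y -> cont_at (partial j (fun z => coord (X z) i)) y)).
  { intros X HX. split; [|split]; intros.
    - destruct (smooth_facts _ _ (HX i H)) as [A1 _]. auto.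
    - destruct (smooth_facts _ _ (HX i H)) as [_ [B _]]. auto.
    - destruct (smooth_facts _ _ (HX i H)) as [_ [_ [C _]]]. auto. }
  assert (Hv0W : smoothVF W v0) by (intros i Hi; apply (smooth_mono U); auto).
  assert (PD : forall X, smoothVF W X -> forall y, Om y -> forall j, (j<3)%nat ->
            dir_deriv_at (phi F X) y (ebasis j) (Dphi F X j y)).
  { intros X HX y [Oy Wy] j Hj. destruct (VF_facts X HX) as [_ [B _]].
    apply phi_deriv. intros i Hi; apply B; auto.
    intros i Hi. apply dd_spec. apply FPD; auto. }
  assert (PC : forall X, smoothVF W X -> forall j, (j<3)%nat -> cont_at (Dphi F X j) x).
  { intros X HX j Hj. destruct (VF_facts X HX) as [A1 [_ C]].
    apply Dphi_cont; [intros i Hi; apply A1; auto | intros i k Hi Hk; apply C; auto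
    | intros i Hi; apply FPC; auto | intros i k Hi Hk; apply FPPC; auto | exact Hj]. }
  assert (TF : forall z w, O z -> N z -> tangent N z w -> sum3 (fun i => coord w i * partial i F z) = 0).
  { intros z w Oz Nz Ht.
    assert (K := kill O F (fun i y => partial i F y) N z w HOo Oz
       ltac:(intros; apply FD; auto) ltac:(intros; apply FPC; auto)
       ltac:(intros y Oy Ny; apply (proj1 (HNF y Oy)); auto) Ht).
    rewrite <- K. unfold sum3; ring. }
  assert (P1z : forall z, Om z -> N z -> phi F v1 z = 0).
  { intros z [Oz Wz] Nz. apply TF; auto. }
  assert (Lin : forall z u w c, sum3 (fun i => coord (vsub u (vscale c w)) i * partial i F z)
       = sum3 (fun i => coord u i * partial i F z) - c * sum3 (fun i => coord w i * partial i F z)).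
  { intros. unfold sum3, vsub, vadd, vscale; cbn [coord Defs.c0 Defs.c1 Defs.c2]. ring. }
  assert (Adef : forall z, Om z -> N z -> regular N al0 z -> phi F v0 z = a z * phi F v2 z).
  { intros z [Oz Wz] Nz Rz. assert (H := TF z _ Oz Nz (HDOT z Wz Nz Rz)). rewrite Lin in H.
    unfold phi. lra. }
  destruct (Hfr x Wx) as [D1 [D2 [I11 [I22 [I12 DA12]]]]].
  destruct (Hreeb x Ux) as [R0 DA0].
  assert (Hp : phi F v2 x <> 0).
  { intro Hp0.
    assert (E1 : phi F v1 x = 0) by (apply P1z; auto).
    assert (E0 : phi F v0 x = 0) by (rewrite (Adef x Omx Nx Rx), Hp0; ring).
    destruct (Hnz x Ox) as [k [Hk Hk0]].
    assert (Hs10 : g x 1%nat 0%nat = g x 0%nat 1%nat) by (apply Hgsym; auto).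
    assert (Hs20 : g x 2%nat 0%nat = g x 0%nat 2%nat) by (apply Hgsym; auto).
    assert (Hs21 : g x 2%nat 1%nat = g x 1%nat 2%nat) by (apply Hgsym; auto).
    unfold in_Delta, form_eval, ip, phi, sum3 in *. cbn [coord] in *.
    rewrite Hs10, Hs20, Hs21 in *.
    destruct (LA (partial 0 F x) (partial 1 F x) (partial 2 F x)
       (c0 (v0 x)) (c1 (v0 x)) (c2 (v0 x)) (c0 (v1 x)) (c1 (v1 x)) (c2 (v1 x))
       (c0 (v2 x)) (c1 (v2 x)) (c2 (v2 x)) (c0 (al0 x)) (c1 (al0 x)) (c2 (al0 x))
       (g x 0%nat 0%nat * c0 (v1 x) + g x 0%nat 1%nat * c1 (v1 x) + g x 0%nat 2%nat * c2 (v1 x))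
       (g x 0%nat 1%nat * c0 (v1 x) + g x 1%nat 1%nat * c1 (v1 x) + g x 1%nat 2%nat * c2 (v1 x))
       (g x 0%nat 2%nat * c0 (v1 x) + g x 1%nat 2%nat * c1 (v1 x) + g x 2%nat 2%nat * c2 (v1 x))
       (g x 0%nat 0%nat * c0 (v2 x) + g x 0%nat 1%nat * c1 (v2 x) + g x 0%nat 2%nat * c2 (v2 x))
       (g x 0%nat 1%nat * c0 (v2 x) + g x 1%nat 1%nat * c1 (v2 x) + g x 1%nat 2%nat * c2 (v2 x))
       (g x 0%nat 2%nat * c0 (v2 x) + g x 1%nat 2%nat * c1 (v2 x) + g x 2%nat 2%nat * c2 (v2 x)))
      as [Z0 [Z1 Z2]].
    - exact R0.
    - exact D1.
    - exact D2.
    - rewrite <- I11; ring.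
    - rewrite <- I12; ring.
    - rewrite <- I12; ring.
    - rewrite <- I22; ring.
    - rewrite <- E0; ring.
    - rewrite <- E1; ring.
    - rewrite <- Hp0; ring.
    - destruct k as [|[|[|k]]]; try lia; auto. }
  assert (AD : forall i j, (i<3)%nat -> (j<3)%nat ->
     dir_deriv_at (fun z => coord (al0 z) i) x (ebasis j) (partial j (fun z => coord (al0 z) i) x)).
  { intros i j Hi Hj. destruct (smooth_facts _ _ (Hal i Hi)) as [_ [B _]]. auto. }
  assert (Ezero : forall Z, smoothVF W Z -> forall c, (forall y, W y -> form_eval al0 y (Z y) = c) ->
            forall j, (j<3)%nat -> Ea al0 Z j x = 0).
  { intros Z HZ c Hc j Hj.
    destruct (HWo x Wx) as [d [Hd HdW]].
    destruct (VF_facts Z HZ) as [_ [ZD _]].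
    assert (Q1 : dir_deriv_at (fun y => form_eval al0 y (Z y)) x (ebasis j) (Ea al0 Z j x)).
    { unfold form_eval, Ea, sum3. repeat apply dd_plus; apply dd_mult;
      first [apply AD | apply ZD]; auto; lia. }
    assert (Q2 : dir_deriv_at (fun y => form_eval al0 y (Z y)) x (ebasis j) 0).
    { apply (dd_ext_loc (fun _ => c) _ x (ebasis j) 0 d Hd).
      intros z Hz. symmetry. apply Hc. apply HdW; auto. apply dd_const. }
    exact (dd_unique _ _ _ _ _ Q1 Q2). }
  assert (FB : forall i j, (i<3)%nat -> (j<3)%nat ->
     form_eval al0 x (bracket (frame3 v0 v1 v2 i) (frame3 v0 v1 v2 j) x)
     = sum3 (fun k => A i j k x * form_eval al0 x (frame3 v0 v1 v2 k x))).
  { intros i j Hi Hj. unfold form_eval at 1.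
    exact (lin_comb_l _ (fun k => A i j k x) (fun k => frame3 v0 v1 v2 k x) (fun m => coord (al0 x) m)
             (fun m Hm => HSF i j Hi Hj x Wx m Hm)). }
  assert (PB : forall i j, (i<3)%nat -> (j<3)%nat ->
     phi F (bracket (frame3 v0 v1 v2 i) (frame3 v0 v1 v2 j)) x
     = sum3 (fun k => A i j k x * phi F (frame3 v0 v1 v2 k) x)).
  { intros i j Hi Hj. unfold phi at 1.
    exact (lin_comb_r _ (fun k => A i j k x) (fun k => frame3 v0 v1 v2 k x) (fun m => partial m F x)
             (fun m Hm => HSF i j Hi Hj x Wx m Hm)). }
  assert (E1v : forall y, W y -> form_eval al0 y (v1 y) = 0) by (intros y Wy; apply (Hfr y Wy)).
  assert (E2v : forall y, W y -> form_eval al0 y (v2 y) = 0) by (intros y Wy; apply (Hfr y Wy)).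
  assert (E0v : forall y, W y -> form_eval al0 y (v0 y) = 1) by (intros y Wy; apply (Hreeb y (HWU y Wy))).
  assert (A120 : A 1%nat 2%nat 0%nat x = -1).
  { assert (H := dA_bracket al0 v1 v2 x).
    rewrite DA12 in H.
    assert (H1 := FB 1%nat 2%nat ltac:(lia) ltac:(lia)). cbn [frame3] in H1.
    rewrite H1 in H. unfold sum3 in H. cbn [frame3] in H.
    rewrite (Ezero v1 Hv1s 0 E1v 0%nat), (Ezero v1 Hv1s 0 E1v 1%nat), (Ezero v1 Hv1s 0 E1v 2%nat),
       (Ezero v2 Hv2s 0 E2v 0%nat), (Ezero v2 Hv2s 0 E2v 1%nat), (Ezero v2 Hv2s 0 E2v 2%nat) in H by lia.
    rewrite R0, D1, D2 in H. lra. }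
  assert (A010 : A 0%nat 1%nat 0%nat x = 0).
  { assert (H := dA_bracket al0 v0 v1 x).
    rewrite DA0 in H.
    assert (H1 := FB 0%nat 1%nat ltac:(lia) ltac:(lia)). cbn [frame3] in H1.
    rewrite H1 in H. unfold sum3 in H. cbn [frame3] in H.
    rewrite (Ezero v1 Hv1s 0 E1v 0%nat), (Ezero v1 Hv1s 0 E1v 1%nat), (Ezero v1 Hv1s 0 E1v 2%nat),
       (Ezero v0 Hv0W 1 E0v 0%nat), (Ezero v0 Hv0W 1 E0v 1%nat), (Ezero v0 Hv0W 1 E0v 2%nat) in H by lia.
    rewrite R0, D1, D2 in H. lra. }
  assert (Sym : forall i j, (i < 3)%nat -> (j < 3)%nat -> partial i (partial j F) x = partial j (partial i F) x).
  { intros i j Hi Hj. apply (SWm.schwarz3 O x i j F HOo Ox).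
    - intros y Oy k Hk. eexists; apply FD; auto.
    - intros y Oy k m Hk Hm. apply FPD; auto.
    - exact Hi. - exact Hj.
    - apply FPPC; auto. - apply FPPC; auto. }
  assert (B01 := bracket_phi F v0 v1 x Sym).
  assert (B12 := bracket_phi F v1 v2 x Sym).
  assert (P01 := PB 0%nat 1%nat ltac:(lia) ltac:(lia)). cbn [frame3] in P01.
  assert (P12 := PB 1%nat 2%nat ltac:(lia) ltac:(lia)). cbn [frame3] in P12.
  rewrite P01 in B01. rewrite P12 in B12. unfold sum3 at 3 in B01. unfold sum3 at 3 in B12.
  cbn [frame3] in B01, B12.
  assert (E1x : phi F v1 x = 0) by (apply P1z; auto).
  assert (E0x : phi F v0 x = a x * phi F v2 x) by (apply Adef; auto).
  assert (BB := kill Om (phi F v1) (Dphi F v1) N x _ HOmo Omx (PD v1 Hv1s) (PC v1 Hv1s) P1z (HDOT x Wx Nx Rx)).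
  set (L0 := sum3 (fun i => Dphi F v0 i x * coord (v1 x) i)).
  set (L2 := sum3 (fun i => Dphi F v2 i x * coord (v1 x) i)).
  exists ((L0 * phi F v2 x - L2 * phi F v0 x) / Rsqr (phi F v2 x)).
  split.
  - intros gam [HgN Hg0] Hv.
    assert (C0 := CR Om (phi F v0) (Dphi F v0) x gam (v1 x) HOmo Omx (PD v0 Hv0W) (PC v0 Hv0W) Hv Hg0).
    assert (C2 := CR Om (phi F v2) (Dphi F v2) x gam (v1 x) HOmo Omx (PD v2 Hv2s) (PC v2 Hv2s) Hv Hg0).
    fold L0 in C0. fold L2 in C2.
    assert (Hq := derivable_pt_lim_div _ _ _ _ _ C0 C2 ltac:(cbv beta; rewrite Hg0; exact Hp)).
    cbv beta in Hq. rewrite Hg0 in Hq.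
    destruct (HOmo x Omx) as [dO [HdO HdO']].
    destruct (curve_near gam (v1 x) Hv dO HdO) as [e1 [He1 Hn]]. rewrite Hg0 in Hn.
    assert (Hpa : 0 < Rabs (phi F v2 x)) by (apply Rabs_pos_lt; auto).
    destruct (dpl_cont _ _ C2 (Rabs (phi F v2 x) / 2) ltac:(lra)) as [e2 [He2 Hc]].
    rewrite Hg0 in Hc.
    apply (dpl_ext_loc ((fun t => phi F v0 (gam t)) / (fun t => phi F v2 (gam t)))%F _ 0 _
       (Rmin e1 e2) (Rmin_pos _ _ He1 He2)); auto.
    intros t Ht. rewrite Rminus_0_r in Ht.
    assert (T1 : Rabs t < e1) by (eapply Rlt_le_trans; [exact Ht| apply Rmin_l]).
    assert (T2 : Rabs t < e2) by (eapply Rlt_le_trans; [exact Ht| apply Rmin_r]).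
    set (z := gam t).
    assert (Omz : Om z) by (apply HdO'; apply Hn; auto).
    assert (Nz : N z) by apply HgN.
    assert (Hz2 : phi F v2 z <> 0).
    { intro H0. specialize (Hc t T2). fold z in Hc. rewrite H0 in Hc.
      rewrite Rminus_0_l, Rabs_Ropp in Hc. lra. }
    assert (Rz : regular N al0 z).
    { intro Hiff. destruct Omz as [Oz Wz].
      destruct (Hfr z Wz) as [_ [D2z _]].
      apply Hz2. apply TF; auto. apply (proj2 (Hiff _)). exact D2z. }
    unfold div_fct; cbv beta; fold z. rewrite (Adef z Omz Nz Rz). field. exact Hz2.
  -
    unfold L0, L2.
    replace (sum3 (fun i => Dphi F v0 i x * coord (v1 x) i))
      with (sum3 (fun j => coord (v1 x) j * Dphi F v0 j x)) by (unfold sum3; ring).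
    replace (sum3 (fun i => Dphi F v2 i x * coord (v1 x) i))
      with (sum3 (fun j => coord (v1 x) j * Dphi F v2 j x)) by (unfold sum3; ring).
    assert (BB' : sum3 (fun j => coord (v0 x) j * Dphi F v1 j x)
                  - a x * sum3 (fun j => coord (v2 x) j * Dphi F v1 j x) = 0).
    { rewrite <- BB. unfold sum3, vsub, vadd, vscale; cbn [coord Defs.c0 Defs.c1 Defs.c2]. ring. }
    set (s1 := sum3 (fun j => coord (v0 x) j * Dphi F v1 j x)) in *.
    set (s2 := sum3 (fun j => coord (v2 x) j * Dphi F v1 j x)) in *.
    set (l0 := sum3 (fun j => coord (v1 x) j * Dphi F v0 j x)) in *.
    set (l2 := sum3 (fun j => coord (v1 x) j * Dphi F v2 j x)) in *.
    set (p := phi F v2 x) in *.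
    rewrite E1x, E0x, A010 in B01. rewrite E1x, E0x, A120 in B12.
    rewrite E0x.
    assert (Hl0 : l0 = s1 - A 0%nat 1%nat 2%nat x * p) by lra.
    assert (Hl2 : l2 = s2 - a x * p + A 1%nat 2%nat 2%nat x * p) by lra.
    assert (Hs1 : s1 = a x * s2) by lra.
    rewrite Hl0, Hl2, Hs1. unfold Rsqr. field. exact Hp.
Qed.
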